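(* Let $\mathcal{T}$ be a finite total order, $\mathcal{G}$ a finite grid poset, and $S\subseteq\mathcal{T}\times\mathcal{G}$ a spread. If $x\in\operatorname{cover}S$, then $\pi_0(x)\in\pi_0\big(\min S\cup(\max S+e_0)\big)$. In particular the aligned subgrid $\pi_0\big(\min S\cup(\max S+e_0)\big)\times\mathcal{G}$ contains $\min S$ and $\operatorname{cover}S$.
   Context: Identify $\mathcal{T}=[m_0]=\{0<\dots<m_0-1\}$ and $\mathcal{G}=[m_1]\times\cdots\times[m_n]$, with product order on $\mathcal{T}\times\mathcal{G}$; $\pi_0:\mathcal{T}\times\mathcal{G}\to\mathcal{T}$ is the first projection. For $x\in\mathcal{T}\times\mathcal{G}$, $x+e_0$ is $x$ with its $0$-th coordinate replaced by $\min(m_0-1,\pi_0(x)+1)$, and $X+e_0=\{x+e_0:x\in X\}$. $\uparrow X=\{p:\exists x\in X,x\le p\}$, $\operatorname{cover}X=\min(\uparrow X\setminus X)$. A spread is a nonempty subset that is convex ($s\le p\le s'$ with $s,s'\in S$ implies $p\in S$) and connected by zigzags of comparable elements. *)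

(* Defs.v *)
From mathcomp Require Import all_boot.
Set Implicit Arguments. Unset Strict Implicit. Unset Printing Implicit Defensive.

(* The poset T x G with T = [m 0], G = [m 1] x ... x [m n].
   Points are finite functions 'I_n.+1 -> nat; coordinate 0 is the T-coordinate
   (pi_0). *)

Definition pt (n : nat) := {ffun 'I_n.+1 -> nat}.

Section Poset.
Variables (n : nat) (m : 'I_n.+1 -> nat).

Definition inP (p : pt n) : bool := [forall i, p i < m i].

Definition le_pt (x y : pt n) : bool := [forall i, x i <= y i].

Definition lt_pt (x y : pt n) : bool := (x != y) && le_pt x y.

Definition comparable_pt (x y : pt n) : bool := le_pt x y || le_pt y x.

Definition pi0 (x : pt n) : nat := x ord0.

Definition add_e0 (x : pt n) : pt n :=
  [ffun i => if i == ord0 then minn (m ord0).-1 (x ord0).+1 else x i].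

(* Subsets of the poset are represented as predicates on points that are
   contained in the poset. *)
Definition up (X : pt n -> Prop) (p : pt n) : Prop :=
  inP p /\ exists2 x, X x & le_pt x p.

Definition min_of (X : pt n -> Prop) (p : pt n) : Prop :=
  X p /\ forall q, X q -> ~ lt_pt q p.

Definition max_of (X : pt n -> Prop) (p : pt n) : Prop :=
  X p /\ forall q, X q -> ~ lt_pt p q.

Definition coverset (X : pt n -> Prop) : pt n -> Prop :=
  min_of (fun p => up X p /\ ~ X p).

Definition is_spread (S : pt n -> Prop) : Prop :=
  (forall p, S p -> inP p) /\
  (exists s, S s) /\
  (forall s p s', S s -> S s' -> inP p -> le_pt s p -> le_pt p s' -> S p) /\
  (forall s s', S s -> S s' ->
     exists zs : seq (pt n),
       path comparable_pt s zs /\ (forall z, z \in zs -> S z) /\ last s zs = s').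

Definition pi0_aligned (S : pt n -> Prop) (t : nat) : Prop :=
  exists y, (min_of S y \/ exists2 z, max_of S z & y = add_e0 z) /\ pi0 y = t.

End Poset.

(* Main.v *)
From Stdlib Require Import Classical.
Require Import Defs.
From mathcomp Require Import all_boot.
From mathcomp Require Import zify.
Set Implicit Arguments. Unset Strict Implicit.

Section Aux.
Variables (n : nat) (m : 'I_n.+1 -> nat).

Lemma le_pt_trans (x y z : pt n) : le_pt x y -> le_pt y z -> le_pt x z.
Proof.
move=> /forallP h1 /forallP h2; apply/forallP=> i; exact: leq_trans (h1 i) (h2 i).
Qed.

Lemma le_pt_refl (x : pt n) : le_pt x x.
Proof. by apply/forallP. Qed.

Lemma lt_pt_diff (q p : pt n) : lt_pt q p -> exists i, q i < p i.
Proof.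
move=> /andP [ne /forallP le].
case: (boolP [exists i, q i != p i]) => [/existsP [i hi]|/existsPn h].
  by exists i; rewrite ltn_neqAle hi le.
have e : q = p by apply/ffunP=> i; apply/eqP; move: (h i); rewrite negbK.
by rewrite e eqxx in ne.
Qed.

Lemma sum_lt (q p : pt n) : lt_pt q p -> \sum_i q i < \sum_i p i.
Proof.
move=> h; have [i hi] := lt_pt_diff h.
move: h => /andP [_ /forallP le].
rewrite (bigD1 i) //= [X in _ < X](bigD1 i) //=.
have : \sum_(j | j != i) q j <= \sum_(j | j != i) p j by apply: leq_sum => j _; exact: le.
move=> H; rewrite -addSn; exact: leq_add hi H.
Qed.

Lemma sum_lt' (q p : pt n) : inP m p -> lt_pt q p ->
  \sum_i (m i - p i) < \sum_i (m i - q i).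
Proof.
move=> /forallP hp h; have [i hi] := lt_pt_diff h.
move: h => /andP [_ /forallP le].
rewrite (bigD1 i) //= [X in _ < X](bigD1 i) //=.
have : \sum_(j | j != i) (m j - p j) <= \sum_(j | j != i) (m j - q j).
  by apply: leq_sum => j _; have := le j; lia.
move=> H; have h1 : (m i - p i).+1 <= m i - q i by have := hp i; lia.
rewrite -addSn; exact: leq_add h1 H.
Qed.

Lemma exists_min (P : pt n -> Prop) s : P s ->
  exists y, P y /\ le_pt y s /\ forall q, P q -> ~ lt_pt q y.
Proof.
move: {2}(\sum_i s i) (leqnn (\sum_i s i)) => k; elim: k s => [|k IH] s hk Ps.
  exists s; split=> //; split; first exact: le_pt_refl.
  by move=> q _ /sum_lt; lia.
case: (classic (exists2 q, P q & lt_pt q s)) => [[q Pq lq]|hn].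
  have [y [Py [ly hy]]] := IH q (leq_trans (sum_lt lq) hk) Pq.
  exists y; split=> //; split=> //; apply: le_pt_trans ly _.
  by move: lq => /andP [].
exists s; split=> //; split; first exact: le_pt_refl.
by move=> q Pq lq; apply: hn; exists q.
Qed.

Lemma exists_max (P : pt n -> Prop) s : (forall p, P p -> inP m p) -> P s ->
  exists y, P y /\ le_pt s y /\ forall q, P q -> ~ lt_pt y q.
Proof.
move=> hin.
move: {2}(\sum_i (m i - s i)) (leqnn (\sum_i (m i - s i))) => k.
elim: k s => [|k IH] s hk Ps.
  exists s; split=> //; split; first exact: le_pt_refl.
  by move=> q Pq /(sum_lt' (hin _ Pq)); lia.
case: (classic (exists2 q, P q & lt_pt s q)) => [[q Pq lq]|hn].
  have [y [Py [ly hy]]] := IH q (leq_trans (sum_lt' (hin _ Pq) lq) hk) Pq.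
  exists y; split=> //; split=> //; apply: le_pt_trans _ ly.
  by move: lq => /andP [].
exists s; split=> //; split; first exact: le_pt_refl.
by move=> q Pq lq; apply: hn; exists q.
Qed.

End Aux.

Theorem mainTheorem15 (n : nat) (m : 'I_n.+1 -> nat) (S : pt n -> Prop) :
  is_spread m S ->
  (forall x, coverset m S x -> pi0_aligned m S (pi0 x)) /\
  (forall x, (min_of S x \/ coverset m S x) -> pi0_aligned m S (pi0 x)).
Proof.
move=> [hin [_ [hconv _]]].
have part1 : forall x, coverset m S x -> pi0_aligned m S (pi0 x).
  move=> x [[[inx [s Ss lsx]] nSx] hmin].
  have [y [Sy [lys ymin]]] := exists_min Ss.
  have lyx := le_pt_trans lys lsx.
  have hy0 : y ord0 <= x ord0 by move: lyx => /forallP; apply.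
  rewrite /pi0; case E: (x ord0) => [|t].
    exists y; split; first by left.
    by rewrite /pi0; move: hy0; rewrite E; lia.
  pose x' : pt n := [ffun i => if i == ord0 then t else x i].
  have lx'x : le_pt x' x.
    apply/forallP=> i; rewrite ffunE; case: eqP => [->|//]; by rewrite E.
  have inx' : inP m x'.
    apply/forallP=> i; move: inx => /forallP /(_ i); move: lx'x => /forallP /(_ i).
    lia.
  have ltx'x : lt_pt x' x.
    rewrite /lt_pt lx'x andbT; apply/eqP=> e.
    by move: (congr1 (fun f : pt n => f ord0) e); rewrite /= ffunE eqxx E; lia.
  case: (classic (exists2 s', S s' & le_pt s' x')) => [hup|hnup].
    have Sx' : S x'.
      apply: NNPP => nS; apply: (hmin x') => //; split=> //; split=> //.
    have [z [Sz [lx'z zmax]]] := exists_max hin Sx'.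
    have hz0 : t <= z ord0 by move: lx'z => /forallP /(_ ord0); rewrite ffunE eqxx.
    have hz : z ord0 = t.
      apply/eqP; rewrite eqn_leq hz0 andbT; rewrite leqNgt; apply/negP => hlt.
      apply: nSx; apply: (hconv x' x z) => //.
      apply/forallP=> i; case: (i =P ord0) => [->|ne]; first by rewrite E.
      move: lx'z => /forallP /(_ i); by rewrite ffunE; move/eqP: ne => /negbTE ->.
    exists (add_e0 m z); split; first by right; exists z.
    rewrite /pi0 ffunE eqxx hz.
    move: inx => /forallP /(_ ord0); rewrite E; lia.
  exists y; split; first by left.
  rewrite /pi0; apply/eqP; rewrite eqn_leq -E hy0 /= E.
  rewrite ltnNge; apply/negP => hle; apply: hnup; exists y => //.
  apply/forallP=> i; rewrite ffunE; case: (i =P ord0) => [->|_]; first by [].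
  by move: lyx => /forallP; apply.
split=> // x [[Sx hx]|hc]; last exact: part1.
by exists x; split=> //; left.
Qed.
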